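(* Let $n\geq 5$ and $1\leq i\leq\lfloor n/2\rfloor$. Let $G_i$ be the graph obtained from the complete graph $K_n$ by deleting $i$ edges, each of which joins two saturated vertices (equivalently, deleting the edges of a matching of size $i$). If $g:V((G_i)_1)\to V((G_i)_2)$ is a constant function, then $$Dist(F_{G_i})=\max\{n-2i,\ \phi(i)\}.$$
   Context: A vertex of a graph is saturated if it is adjacent to all other vertices. $Dist(H)$ is the least $t$ such that $H$ has a labeling $V(H)\to\{1,\dots,t\}$ preserved by no non-identity automorphism of $H$. Functigraph: for disjoint copies $H_1,H_2$ of a graph $H$ and a function $g:V(H_1)\to V(H_2)$, $F_H$ has vertex set $V(H_1)\cup V(H_2)$ and edge set $E(H_1)\cup E(H_2)\cup\{uv: u\in V(H_1),\ g(u)=v\}$. The function $\phi:\mathbb{N}\to\mathbb{N}\setminus\{1\}$ is defined by $\phi(i)=k$, where $k$ is the least number (with $k\ge 2$) such that $i\leq\binom{k}{2}$; e.g. $\phi(32)=9$. *)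

(* Defs.v *)
From mathcomp Require Import all_boot all_fingroup.
Set Implicit Arguments. Unset Strict Implicit. Unset Printing Implicit Defensive.

(* Graphs: a simple graph on a finite vertex type T is a symmetric,
   irreflexive boolean relation adj : rel T. *)

Definition is_aut (T : finType) (adj : rel T) (s : {perm T}) : bool :=
  [forall x, forall y, adj (s x) (s y) == adj x y].

Definition distinguishing (T : finType) (adj : rel T) (L : Type) (f : T -> L) : Prop :=
  forall s : {perm T}, is_aut adj s -> (forall x, f (s x) = f x) -> s = 1%g.

(* adj has a distinguishing labeling with labels in {1..t} (represented by 'I_t). *)
Definition t_distinguishable (T : finType) (adj : rel T) (t : nat) : bool :=
  [exists f : {ffun T -> 'I_t},
     [forall s : {perm T}, (is_aut adj s && [forall x, f (s x) == f x]) ==> (s == 1%g)]].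

Lemma t_distinguishable_card (T : finType) (adj : rel T) :
  exists t, t_distinguishable adj t.
Proof.
exists #|T|; apply/existsP; exists [ffun x => enum_rank x].
apply/forallP => s; apply/implyP => /andP [_ /forallP H].
apply/eqP/permP => x; rewrite perm1.
by have := H x; rewrite !ffunE => /eqP /enum_rank_inj.
Qed.

Definition Dist (T : finType) (adj : rel T) : nat :=
  ex_minn (t_distinguishable_card adj).

Lemma phi_ex (i : nat) : exists k, (2 <= k) && (i <= 'C(k, 2)).
Proof.
exists i.+2; rewrite /= binS bin1; apply: leq_trans (leqnSn i) _; exact: leq_addl.
Qed.

Definition phi (i : nat) : nat := ex_minn (phi_ex i).

Definition is_matching (n : nat) (M : {set {set 'I_n}}) : Prop :=
  (forall e, e \in M -> #|e| = 2) /\ trivIset M.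

Definition Kn_minus (n : nat) (M : {set {set 'I_n}}) : rel 'I_n :=
  fun a b => (a != b) && ([set a; b] \notin M).

(* Functigraph F_H of H (on vertex type V) w.r.t. g : V(H_1) -> V(H_2);
   H_1 is the left copy (inl), H_2 the right copy (inr). *)
Definition functigraph (V : finType) (adj : rel V) (g : V -> V) : rel (V + V) :=
  fun x y =>
    match x, y with
    | inl a, inl b => adj a b
    | inr a, inr b => adj a b
    | inl a, inr b => g a == b
    | inr b, inl a => g a == b
    end.

(* Main.v *)
Require Import Defs.
From mathcomp Require Import all_boot all_fingroup.
Set Implicit Arguments. Unset Strict Implicit. Unset Printing Implicit Defensive.

Definition injmap (T U : finType) (d : U) (A : {set T}) (B : {set U}) (x : T) : U :=
  nth d (enum B) (index x (enum A)).

Lemma injmapP (T U : finType) (d : U) (A : {set T}) (B : {set U}) : #|A| <= #|B| ->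
  {in A &, injective (injmap d A B)} /\ {in A, forall x, injmap d A B x \in B}.
Proof.
move=> le; have Hi x : x \in A -> index x (enum A) < #|B|.
  by move=> xA; apply: leq_trans le; rewrite cardE index_mem mem_enum.
split.
- move=> x y xA yA /eqP; rewrite /injmap nth_uniq ?enum_uniq -?cardE ?Hi //.
  by move/eqP; apply: (index_inj x); rewrite mem_enum.
- by move=> x xA; rewrite /injmap -mem_enum mem_nth // -cardE Hi.
Qed.

Lemma set2_neq n (M : {set {set 'I_n}}) a b :
  is_matching M -> [set a; b] \in M -> a != b.
Proof.
by case=> H2 _ /H2; rewrite cards2; case: (a != b).
Qed.

Lemma match_uniq n (M : {set {set 'I_n}}) a b c : is_matching M ->
  [set a; b] \in M -> [set a; c] \in M -> b = c.
Proof.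
move=> hM ab ac.
have E : [set a; b] = [set a; c].
  apply/eqP; apply: contraT => ne.
  have /trivIsetP tr := hM.2.
  have := tr _ _ ab ac ne.
  by move/disjointFr => /(_ a); rewrite !inE !eqxx /=; move/(_ isT).
have : b \in [set a; c] by rewrite -E !inE eqxx orbT.
rewrite !inE => /orP [/eqP ba|/eqP //].
by have := set2_neq hM ab; rewrite ba eqxx.
Qed.

Lemma imset2 (T U : finType) (f : T -> U) a b : f @: [set a; b] = [set f a; f b].
Proof. by rewrite imsetU1 imset_set1. Qed.

Lemma presM n (M : {set {set 'I_n}}) (s : {perm 'I_n}) :
  (forall e, e \in M -> s @: e \in M) -> forall A : {set 'I_n}, (s @: A \in M) = (A \in M).
Proof.
move=> H A.
have inj : injective (fun B : {set 'I_n} => s @: B) by apply: imset_inj; apply: perm_inj.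
have E : [set (fun B : {set 'I_n} => s @: B) B | B in M] = M.
  apply/eqP; rewrite eqEcard card_imset // leqnn andbT.
  by apply/subsetP => B /imsetP [C CM ->]; apply: H.
by rewrite -{1}E (mem_imset _ _ inj).
Qed.

Lemma knP n (M : {set {set 'I_n}}) (s : {perm 'I_n}) :
  (forall e, e \in M -> s @: e \in M) -> forall a b, Kn_minus M (s a) (s b) = Kn_minus M a b.
Proof.
move=> H a b; rewrite /Kn_minus (inj_eq (@perm_inj _ s)) -imset2 presM //.
Qed.

Definition liftl_fun n (s : {perm 'I_n}) (x : 'I_n + 'I_n) : 'I_n + 'I_n :=
  match x with inl a => inl (s a) | inr b => inr b end.

Lemma liftl_inj n (s : {perm 'I_n}) : injective (liftl_fun s).
Proof.
by case=> [a|a] [b|b] //= [] // /perm_inj ->.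
Qed.

Definition liftl n (s : {perm 'I_n}) : {perm ('I_n + 'I_n)} := perm (@liftl_inj n s).

Lemma aut_liftl n (M : {set {set 'I_n}}) g (s : {perm 'I_n}) :
  (forall a b, g a = g b) -> (forall e, e \in M -> s @: e \in M) ->
  is_aut (functigraph (Kn_minus M) g) (liftl s).
Proof.
move=> cg H; apply/forallP => x; apply/forallP => y; rewrite !permE.
case: x => [a|a]; case: y => [b|b] //=; rewrite ?knP //.
all: by apply/eqP; congr (_ == _); apply: cg.
Qed.

Lemma lower_perm n (M : {set {set 'I_n}}) g t (f : {ffun 'I_n + 'I_n -> 'I_t}) (s : {perm 'I_n}) :
  (forall a b, g a = g b) -> s != 1%g -> (forall e, e \in M -> s @: e \in M) ->
  (forall a, f (inl (s a)) = f (inl a)) ->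
  ~~ [forall s : {perm 'I_n + 'I_n},
        (is_aut (functigraph (Kn_minus M) g) s && [forall x, f (s x) == f x]) ==> (s == 1%g)].
Proof.
move=> cg ns H Hf; apply/negP => /forallP /(_ (liftl s)).
rewrite aut_liftl //=.
have -> : [forall x, f (liftl s x) == f x].
  by apply/forallP => -[a|a]; rewrite permE //= Hf.
move=> /implyP /(_ isT) /eqP E.
move/negP: ns; apply; apply/eqP/permP => a.
have : liftl s (inl a) = inl a by rewrite E perm1.
by rewrite permE perm1 => -[].
Qed.

Lemma notin_other n (M : {set {set 'I_n}}) e e' x : is_matching M ->
  e \in M -> e' \in M -> e != e' -> x \in e' -> x \notin e.
Proof.
move=> hM eM e'M ne xe'.
have /trivIsetP tr := hM.2.
by rewrite (disjointFr (tr _ _ e'M eM _) xe') // eq_sym.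
Qed.

Lemma fix_imset (T : finType) (s : {perm T}) (e : {set T}) :
  (forall x, x \in e -> s x = x) -> s @: e = e.
Proof. by move=> H; rewrite -[RHS]imset_id; apply: eq_in_imset. Qed.

Lemma cover_card n (M : {set {set 'I_n}}) : is_matching M -> #|cover M| = 2 * #|M|.
Proof.
case=> H2 tr; move: tr; rewrite /trivIset => /eqP <-.
rewrite (eq_bigr (fun _ => 2)); first by rewrite sum_nat_const mulnC.
by move=> e /H2.
Qed.

Lemma in_cover n (M : {set {set 'I_n}}) e x : e \in M -> x \in e -> x \in cover M.
Proof. by move=> eM xe; apply/bigcupP; exists e. Qed.

Lemma phi_spec i : 2 <= phi i /\ i <= 'C(phi i, 2) /\ forall t, t < phi i -> 'C(t, 2) < i \/ t < 2.
Proof.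
rewrite /phi; case: ex_minnP => k /andP [k2 ik] Hmin; split => //; split => // t tk.
case: (leqP 2 t) => t2; last by right.
left; rewrite ltnNge; apply/negP => it.
by have := Hmin t; rewrite t2 it => /(_ isT); rewrite leqNgt tk.
Qed.

Lemma lower n i (M : {set {set 'I_n}}) g t : is_matching M -> #|M| = i -> 1 <= i ->
  (forall a b, g a = g b) -> t < maxn (n - 2 * i) (phi i) ->
  ~~ t_distinguishable (functigraph (Kn_minus M) g) t.
Proof.
move=> hM cM i1 cg tm; apply/existsP => -[f Hf].
suff [s [ns pM pf]] : exists s : {perm 'I_n}, [/\ s != 1%g,
   (forall e, e \in M -> s @: e \in M) & forall a, f (inl (s a)) = f (inl a)].
  by have := lower_perm (f:=f) cg ns pM pf; rewrite Hf.
pose f' a := f (inl a).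
have H2 := hM.1.
case: (leqP (n - 2 * i) t) => [nt|]; last first.
  move=> tn.
  have cU : #|~: cover M| = n - 2 * i.
    have := cardsC (cover M); rewrite card_ord cover_card // cM => E.
    by rewrite -[in RHS]E addKn.
  have : [exists a, exists b, [&& a \in ~: cover M, b \in ~: cover M, a != b & f' a == f' b]].
    apply: contraT => /existsPn Hn.
    have inj : {in ~: cover M &, injective f'}.
      move=> a b aU bU fab; apply/eqP; apply: contraT => ab.
      by move: (Hn a) => /existsPn /(_ b); rewrite aU bU ab fab eqxx.
    have := max_card (mem (f' @: ~: cover M)); rewrite card_in_imset // cU card_ord.
    by rewrite leqNgt tn.
  move=> /existsP [a /existsP [b /and4P [aU bU ab /eqP fab]]].
  exists (tperm a b); split.
  - apply/eqP => /permP /(_ a); rewrite tpermL perm1 => /eqP; rewrite eq_sym.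
    by apply/negP.
  - move=> e eM; rewrite fix_imset // => x xe; apply: tpermD.
    + by apply: contraTneq aU => ->; rewrite inE negbK (in_cover eM xe).
    + by apply: contraTneq bU => ->; rewrite inE negbK (in_cover eM xe).
  - by move=> x; rewrite /f' in fab; case: tpermP => // ->; rewrite fab.
have tphi : t < phi i.
  by move: tm; rewrite leq_max leqNgt ltnS nt orFb.
have Ct : 'C(t, 2) < i.
  have [_ [_ H]] := phi_spec i.
  by case: (H t tphi) => // t2; rewrite bin_small.
case: (boolP [exists e in M, #|f' @: e| != 2]) => [/existsP [e /andP [eM ce]] | all2].
  have /eqP/cards2P [a [b [ab ee]]] := H2 e eM.
  have fab : f' a = f' b.
    by apply/eqP; apply: contraNT ce => ne; rewrite ee imset2 cards2 ne.
  exists (tperm a b); split.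
  - apply/eqP => /permP /(_ a); rewrite tpermL perm1 => /eqP; rewrite eq_sym.
    by apply/negP.
  - move=> e' e'M; case: (eqVneq e e') => [<-|ne].
      by rewrite ee imset2 tpermL tpermR setUC -ee.
    rewrite fix_imset // => x xe; have := notin_other hM eM e'M ne xe.
    by rewrite ee !inE negb_or => /andP [xa xb]; apply: tpermD; rewrite eq_sym.
  - by move=> x; rewrite /f' in fab; case: tpermP => // ->; rewrite fab.
have : [exists e1, exists e2, [&& e1 \in M, e2 \in M, e1 != e2 & f' @: e1 == f' @: e2]].
  apply: contraT => /existsPn Hn.
  have inj : {in M &, injective (fun e : {set 'I_n} => f' @: e)}.
    move=> a b aU bU fab; apply/eqP; apply: contraT => ab.
    by move: (Hn a) => /existsPn /(_ b); rewrite aU bU ab /= fab eqxx.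
  have : #|[set (fun e : {set 'I_n} => f' @: e) e | e in M]| <= #|[set P : {set 'I_t} | #|P| == 2]|.
    apply: subset_leq_card; apply/subsetP => P /imsetP [e eM ->].
    rewrite inE; move: all2 => /existsPn /(_ e); by rewrite eM /= negbK.
  by rewrite card_in_imset // card_draws card_ord cM leqNgt Ct.
move=> /existsP [e1 /existsP [e2 /and4P [e1M e2M ne /eqP fe]]].
have /eqP/cards2P [a [b [ab E1]]] := H2 e1 e1M.
have /eqP/cards2P [c0 [d0 [cd0 E2]]] := H2 e2 e2M.
have nae2 : a \notin e2 by apply: (notin_other hM e2M e1M); rewrite 1?eq_sym // E1 !inE eqxx.
have nbe2 : b \notin e2 by apply: (notin_other hM e2M e1M); rewrite 1?eq_sym // E1 !inE eqxx orbT.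
have fab : f' a != f' b.
  have : #|f' @: e1| == 2 by move: all2 => /existsPn /(_ e1); rewrite e1M /= negbK.
  by rewrite E1 imset2 cards2; case: (_ != _).
have [c [d [E2' fac fbd]]] : exists c d, [/\ e2 = [set c; d], f' a = f' c & f' b = f' d].
  have : f' a \in f' @: e2 by rewrite -fe imset_f // E1 !inE eqxx.
  have : f' b \in f' @: e2 by rewrite -fe imset_f // E1 !inE eqxx orbT.
  rewrite E2 imset2 !inE => /orP [] /eqP fb /orP [] /eqP fa.
  - by move: fab; rewrite fa fb eqxx.
  - by exists d0, c0; rewrite setUC.
  - by exists c0, d0.
  - by move: fab; rewrite fa fb eqxx.
move: nae2 nbe2; rewrite E2' !inE !negb_or => /andP [ac ad] /andP [bc bd].
have cd : c != d by have := H2 e2 e2M; rewrite E2' cards2; case: (c != d).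
exists (tperm a c * tperm b d)%g.
have sa : (tperm a c * tperm b d)%g a = c by rewrite permM tpermL tpermD // eq_sym.
have sb : (tperm a c * tperm b d)%g b = d by rewrite permM (tpermD ab) ?(eq_sym c) // tpermL.
have sc : (tperm a c * tperm b d)%g c = a by rewrite permM tpermR tpermD // eq_sym.
have sd : (tperm a c * tperm b d)%g d = b by rewrite permM (tpermD ad) ?(eq_sym d) // tpermR.
have sx x : x \notin e1 -> x \notin e2 -> (tperm a c * tperm b d)%g x = x.
  rewrite E1 E2' !inE !negb_or => /andP [xa xb] /andP [xc xd].
  by rewrite permM !tpermD // eq_sym.
split.
- by apply/eqP => /permP /(_ a); rewrite sa perm1 => ca; move: ac; rewrite ca eqxx.
- move=> e eM; case: (eqVneq e e1) => [->|ne1].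
    by rewrite E1 imset2 sa sb -E2'.
  case: (eqVneq e e2) => [->|ne2].
    by rewrite E2' imset2 sc sd -E1.
  rewrite fix_imset // => x xe; apply: sx.
  + by apply: (notin_other hM e1M eM); rewrite // eq_sym.
  + by apply: (notin_other hM e2M eM); rewrite // eq_sym.
- move=> x; case: (boolP (x \in e1)) => [|xe1].
    by rewrite E1 !inE => /orP [] /eqP ->; rewrite ?sa ?sb -/(f' _) -/(f' _) ?fac ?fbd.
  case: (boolP (x \in e2)) => [|xe2]; last by rewrite sx.
  by rewrite E2' !inE => /orP [] /eqP ->; rewrite ?sc ?sd -/(f' _) -/(f' _) ?fac ?fbd.
Qed.

Definition Pairs (t : nat) : {set {set 'I_t}} := [set P : {set 'I_t} | #|P| == 2].

Definition Lab n t (M : {set {set 'I_n}}) (d : 'I_t) (a : 'I_n) : 'I_t :=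
  if a \in cover M then injmap d (pblock M a) (injmap set0 M (Pairs t) (pblock M a)) a
  else injmap d (~: cover M) setT a.

Lemma H_prop n t (M : {set {set 'I_n}}) : #|M| <= 'C(t, 2) ->
  {in M &, injective (injmap set0 M (Pairs t))} /\
  {in M, forall e, #|injmap set0 M (Pairs t) e| = 2}.
Proof.
move=> cP; have [] := @injmapP _ _ set0 M (Pairs t).
  by rewrite /Pairs card_draws card_ord.
by move=> H1 H2; split => // e eM; have := H2 e eM; rewrite inE => /eqP.
Qed.

Lemma Lab_block n t (M : {set {set 'I_n}}) (d : 'I_t) e x : is_matching M ->
  e \in M -> x \in e -> Lab M d x = injmap d e (injmap set0 M (Pairs t) e) x.
Proof.
move=> hM eM xe; rewrite /Lab (in_cover eM xe).
by rewrite (def_pblock hM.2 eM xe).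
Qed.

Lemma Lab_inj_block n t (M : {set {set 'I_n}}) (d : 'I_t) e : is_matching M ->
  #|M| <= 'C(t, 2) -> e \in M -> {in e &, injective (Lab M d)} /\
   {in e, forall x, Lab M d x \in injmap set0 M (Pairs t) e}.
Proof.
move=> hM cP eM; have [_ H2] := H_prop cP.
have [] := @injmapP _ _ d e (injmap set0 M (Pairs t) e).
  by rewrite H2 // hM.1.
move=> I1 I2; split.
  by move=> x y xe ye; rewrite !(Lab_block d hM eM) //; apply: I1.
by move=> x xe; rewrite (Lab_block d hM eM) //; apply: I2.
Qed.

Lemma Lab_img n t (M : {set {set 'I_n}}) (d : 'I_t) e : is_matching M ->
  #|M| <= 'C(t, 2) -> e \in M -> Lab M d @: e = injmap set0 M (Pairs t) e.
Proof.
move=> hM cP eM; have [I1 I2] := Lab_inj_block d hM cP eM.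
have [_ H2] := H_prop cP.
apply/eqP; rewrite eqEcard card_in_imset // H2 // hM.1 // leqnn andbT.
by apply/subsetP => y /imsetP [x xe ->]; apply: I2.
Qed.

Lemma Lab_M n t (M : {set {set 'I_n}}) (d : 'I_t) e1 e2 : is_matching M ->
  #|M| <= 'C(t, 2) -> e1 \in M -> e2 \in M -> Lab M d @: e1 = Lab M d @: e2 -> e1 = e2.
Proof.
move=> hM cP e1M e2M; rewrite !Lab_img //.
by have [H1 _] := H_prop cP; apply: H1.
Qed.

Lemma Lab_U n t (M : {set {set 'I_n}}) (d : 'I_t) : #|~: cover M| <= t ->
  {in ~: cover M &, injective (Lab M d)}.
Proof.
move=> cU; have [] := @injmapP _ _ d (~: cover M) [set: 'I_t].
  by rewrite cardsT card_ord.
move=> I1 _ x y; rewrite !inE => xc yc; rewrite /Lab (negbTE xc) (negbTE yc).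
by apply: I1; rewrite inE.
Qed.

Lemma partner n (M : {set {set 'I_n}}) x : is_matching M -> x \in cover M ->
  exists y, pblock M x = [set x; y].
Proof.
move=> hM xc; have eM := pblock_mem xc.
have := mem_pblock M x; rewrite xc.
have /eqP/cards2P [p [q [pq ->]]] := hM.1 _ eM.
rewrite !inE => /orP [] /eqP ->; first by exists q.
by exists p; rewrite setUC.
Qed.

Lemma G_fix n t (M : {set {set 'I_n}}) (d : 'I_t) (s : 'I_n -> 'I_n) :
  is_matching M -> #|~: cover M| <= t -> #|M| <= 'C(t, 2) -> injective s ->
  (forall a b, Kn_minus M (s a) (s b) = Kn_minus M a b) ->
  (forall a, Lab M d (s a) = Lab M d a) -> forall x, s x = x.
Proof.
move=> hM cU cP inj Hk HL x.
pose p := perm inj.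
have sp z : s ((p^-1)%g z) = z by have := permKV p z; rewrite permE.
case: (boolP (x \in cover M)) => xc.
  have [y E] := partner hM xc.
  have eM : [set x; y] \in M by rewrite -E pblock_mem.
  have xy := set2_neq hM eM.
  have : Kn_minus M (s x) (s y) = false by rewrite Hk /Kn_minus eM andbF.
  rewrite /Kn_minus (inj_eq inj) xy /= => /negbFE sM.
  have E2 : [set s x; s y] = [set x; y].
    apply: (Lab_M (d:=d) hM cP sM eM).
    by rewrite !imset2 !HL.
  have : s x \in [set x; y] by rewrite -E2 !inE eqxx.
  rewrite !inE => /orP [/eqP //|/eqP sxy].
  have [I1 _] := Lab_inj_block d hM cP eM.
  have : x = y by apply: I1; rewrite ?inE ?eqxx ?orbT // -sxy HL.
  by move/eqP: xy.
have sxc : s x \notin cover M.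
  apply/negP => sxc.
  have [z E] := partner hM sxc.
  have eM : [set s x; z] \in M by rewrite -E pblock_mem.
  have : Kn_minus M (s x) (s ((p^-1)%g z)) = false by rewrite sp /Kn_minus eM andbF.
  rewrite Hk /Kn_minus; case: eqP => [xw|_] /=.
    by move: (set2_neq hM eM); rewrite -[z]sp -xw eqxx.
  by move/negbFE => wM; move: xc; rewrite (in_cover wM) // !inE eqxx.
by apply: (Lab_U (d:=d) cU); rewrite ?inE.
Qed.

Lemma exists_notin (T : finType) (A : {set T}) : #|A| < #|T| -> exists x, x \notin A.
Proof.
move=> lt; have : ~: A != set0.
  by rewrite -card_gt0; have := cardsC A; move=> E; rewrite -(ltn_add2l #|A|) addn0 E.
by case/set0Pn => x; rewrite inE => xA; exists x.
Qed.

Lemma aut_adj (T : finType) (adj : rel T) (s : {perm T}) x y :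
  is_aut adj s -> adj (s x) (s y) = adj x y.
Proof. by move=> /forallP /(_ x) /forallP /(_ y) /eqP. Qed.

Lemma aut_inv (T : finType) (adj : rel T) (s : {perm T}) :
  is_aut adj s -> is_aut adj (s^-1)%g.
Proof.
move=> H; apply/forallP => x; apply/forallP => y; apply/eqP.
by rewrite -(aut_adj _ _ H) !permKV.
Qed.

Lemma deg_pres (T : finType) (adj : rel T) (s : {perm T}) x :
  is_aut adj s -> #|[set y | adj (s x) y]| = #|[set y | adj x y]|.
Proof.
move=> H; suff -> : [set y | adj (s x) y] = s @: [set y | adj x y].
  by rewrite card_imset //; apply: perm_inj.
apply/setP => y; rewrite -[y](permKV s) mem_imset; last by apply: perm_inj.
by rewrite !inE aut_adj.
Qed.

Lemma two_adj n (M : {set {set 'I_n}}) a : 5 <= n -> is_matching M ->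
  exists b, Kn_minus M a b.
Proof.
move=> n5 hM.
have [b1 b1a] : exists b, b \notin [set a] by apply: exists_notin; rewrite cards1 card_ord; apply: leq_trans n5.
rewrite inE in b1a.
case: (boolP ([set a; b1] \in M)) => ab1; last by exists b1; rewrite /Kn_minus eq_sym b1a.
have [b2 b2n] : exists b, b \notin [set a; b1].
  by apply: exists_notin; rewrite cards2 card_ord; apply: leq_trans n5; case: (_ != _).
move: b2n; rewrite !inE negb_or => /andP [b2a b2b1].
exists b2; rewrite /Kn_minus eq_sym b2a /=; apply/negP => ab2.
by move: b2b1; rewrite (match_uniq hM ab1 ab2) eqxx.
Qed.

Lemma path2 n (M : {set {set 'I_n}}) a a' : 5 <= n -> is_matching M -> a != a' ->
  ~~ Kn_minus M a a' -> exists c, Kn_minus M a c && Kn_minus M c a'.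
Proof.
move=> n5 hM aa' /nandP [/negPn aa'' | /negPn aM]; first by move: aa'; rewrite aa''.
have [c cn] : exists c, c \notin [set a; a'].
  by apply: exists_notin; rewrite cards2 card_ord; apply: leq_trans n5; case: (_ != _).
move: cn; rewrite !inE negb_or => /andP [ca ca'].
exists c; rewrite /Kn_minus eq_sym ca ca' /=; apply/andP; split; apply/negP => cM.
  by move: ca'; rewrite (match_uniq hM aM cM) eqxx.
have aM' : [set a'; a] \in M by rewrite setUC.
have cM' : [set a'; c] \in M by rewrite setUC.
by move: ca; rewrite (match_uniq hM aM' cM') eqxx.
Qed.

Lemma fix_v n (M : {set {set 'I_n}}) g v (s : {perm 'I_n + 'I_n}) : 5 <= n -> is_matching M ->
  (forall a, g a = v) -> is_aut (functigraph (Kn_minus M) g) s -> s (inr v) = inr v.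
Proof.
move=> n5 hM gv H; set F := functigraph (Kn_minus M) g.
have lo : n.+1 <= #|[set y | F (inr v) y]|.
  have [b0 vb0] := two_adj v n5 hM.
  have sub : inr b0 |: [set inl a | a in [set: 'I_n]] \subset [set y | F (inr v) y].
    apply/subsetP => y; rewrite !inE => /orP [/eqP ->|/imsetP [a _ ->]] //=.
    by rewrite gv.
  apply: leq_trans (subset_leq_card sub).
  rewrite cardsU1 card_imset; last by move=> ? ? [].
  rewrite cardsT card_ord -add1n leq_add2r lt0b.
  by apply/negP => /imsetP [].
have hi x : x != inr v -> #|[set y | F x y]| <= n.
  case: x => [a|b] ne.
  - have sub : [set y | F (inl a) y] \subset inr v |: [set inl c | c in [set~ a]].
      apply/subsetP => -[c|c]; rewrite !inE /=.
        by move=> /andP [ac _]; apply/imsetP; exists c; rewrite // !inE eq_sym.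
      by rewrite gv => /eqP ->; rewrite eqxx.
    apply: leq_trans (subset_leq_card sub) _.
    rewrite cardsU1.
    rewrite card_imset; last by move=> ? ? [].
    rewrite cardsC1 card_ord; have n0 : 0 < n by apply: leq_trans n5.
    by case: (_ \notin _); rewrite ?add1n ?add0n ?prednK // leq_pred.
  - have sub : [set y | F (inr b) y] \subset [set inr c | c in [set~ b]].
      apply/subsetP => -[c|c]; rewrite !inE /=.
        by rewrite gv => /eqP vb; move: ne; rewrite vb eqxx.
      by move=> /andP [bc _]; apply/imsetP; exists c; rewrite // !inE eq_sym.
    apply: leq_trans (subset_leq_card sub) _.
    by rewrite card_imset ?cardsC1 ?card_ord ?leq_pred //; move=> ? ? [].
apply/eqP; apply: contraT => ne.
by have := hi _ ne; rewrite deg_pres // leqNgt lo.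
Qed.

Lemma inl_inl n (M : {set {set 'I_n}}) g v (s : {perm 'I_n + 'I_n}) : 5 <= n -> is_matching M ->
  (forall a, g a = v) -> is_aut (functigraph (Kn_minus M) g) s ->
  forall a, exists c, s (inl a) = inl c.
Proof.
move=> n5 hM gv H; set F := functigraph (Kn_minus M) g.
have sv := fix_v n5 hM gv H.
have nv a : s (inl a) != inr v by rewrite -sv (inj_eq (@perm_inj _ s)).
pose Q a := [exists b, (s (inl a) == inr b) && (b != v)].
have step a0 a1 : Q a0 -> Kn_minus M a0 a1 -> Q a1.
  case/existsP => b /andP [/eqP E bv] adj.
  have : F (s (inl a0)) (s (inl a1)) by rewrite aut_adj.
  rewrite E; case E1: (s (inl a1)) => [c|b'] /=.
    by rewrite gv => /eqP vb; move: bv; rewrite vb eqxx.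
  move=> _; apply/existsP; exists b'; rewrite E1 eqxx /=.
  by apply: contraNneq (nv a1) => <-; rewrite E1.
move=> a; case E: (s (inl a)) => [c|b]; first by exists c.
exfalso.
have Qa : Q a by apply/existsP; exists b; rewrite E eqxx /=; move: (nv a); rewrite E; apply: contra => /eqP ->.
have allQ a' : Q a'.
  case: (eqVneq a a') => [<- //|ne].
  case: (boolP (Kn_minus M a a')) => adj; first by apply: step adj.
  have [c /andP [ac ca']] := path2 n5 hM ne adj.
  by apply: (step c) => //; apply: (step a).
have sub : [set s (inl x) | x in [set: 'I_n]] \subset [set inr c | c in [set~ v]].
  apply/subsetP => y /imsetP [x _ ->].
  have /existsP [b' /andP [/eqP -> bv]] := allQ x.
  by apply: imset_f; rewrite !inE.
have := subset_leq_card sub.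
rewrite !card_imset; try by move=> ? ? [].
2: by move=> ? ? /perm_inj [].
rewrite cardsT cardsC1 card_ord; have n0 : 0 < n by apply: leq_trans n5.
by rewrite -{1}(prednK n0) ltnn.
Qed.

Lemma upper n i (M : {set {set 'I_n}}) g : 5 <= n -> is_matching M -> #|M| = i ->
  (forall a b, g a = g b) ->
  t_distinguishable (functigraph (Kn_minus M) g) (maxn (n - 2 * i) (phi i)).
Proof.
move=> n5 hM cM cg; set t := maxn _ _; set F := functigraph (Kn_minus M) g.
have [p2 [ip _]] := phi_spec i.
have t0 : 0 < t by apply: leq_trans (leq_maxr _ _); apply: leq_trans p2.
pose d := Ordinal t0.
have cU : #|~: cover M| <= t.
  have := cardsC (cover M); rewrite card_ord cover_card // cM => E.
  by rewrite -(addKn (2 * i) #|~: cover M|) E leq_maxl.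
have cP : #|M| <= 'C(t, 2) by rewrite cM; apply: leq_trans ip (leq_bin2l _ (leq_maxr _ _)).
have n0 : 0 < n by apply: leq_trans n5.
pose v := g (Ordinal n0).
have gv a : g a = v by apply: cg.
apply/existsP; exists [ffun x => match x with inl a => Lab M d a | inr b => Lab M d b end].
apply/forallP => s; apply/implyP => /andP [H /forallP Hf].
have l := inl_inl n5 hM gv H.
have r b : exists c, s (inr b) = inr c.
  case E: (s (inr b)) => [a|c]; last by exists c.
  have [c Ec] := inl_inl n5 hM gv (aut_inv H) a.
  have : (s^-1)%g (inl a) = inr b by rewrite -E permK.
  by rewrite Ec.
pose s1 a := if s (inl a) is inl c then c else a.
pose s2 a := if s (inr a) is inr c then c else a.
have e1 a : s (inl a) = inl (s1 a) by rewrite /s1; have [c ->] := l a.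
have e2 a : s (inr a) = inr (s2 a) by rewrite /s2; have [c ->] := r a.
have f1 : forall x, s1 x = x.
  apply: (G_fix (d:=d) hM cU cP).
  - move=> a b E; have : s (inl a) = s (inl b) by rewrite !e1 E.
    by move/perm_inj => [].
  - by move=> a b; have := aut_adj (inl a) (inl b) H; rewrite !e1.
  - by move=> a; have := Hf (inl a); rewrite e1 !ffunE => /eqP.
have f2 : forall x, s2 x = x.
  apply: (G_fix (d:=d) hM cU cP).
  - move=> a b E; have : s (inr a) = s (inr b) by rewrite !e2 E.
    by move/perm_inj => [].
  - by move=> a b; have := aut_adj (inr a) (inr b) H; rewrite !e2.
  - by move=> a; have := Hf (inr a); rewrite e2 !ffunE => /eqP.
by apply/eqP/permP => -[a|a]; rewrite perm1 ?e1 ?e2 ?f1 ?f2.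
Qed.

Theorem theorem3p4 (n i : nat) (M : {set {set 'I_n}}) (g : 'I_n -> 'I_n) :
  5 <= n -> 1 <= i -> i <= n %/ 2 ->
  is_matching M -> #|M| = i ->
  (forall a b, g a = g b) ->
  Dist (functigraph (Kn_minus M) g) = maxn (n - 2 * i) (phi i).
Proof.
move=> n5 i1 _ hM cM cg; rewrite /Dist; case: ex_minnP => m Hm Hmin.
apply/eqP; rewrite eqn_leq Hmin ?upper //= leqNgt; apply/negP => lt.
by have := lower hM cM i1 cg lt; rewrite Hm.
Qed.
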